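(* Let $\mathbb{K}\in\{\mathbb{R},\mathbb{C}\}$, $U:=\mathbb{K}^n$, $\mathbf{u}^1,\dots,\mathbf{u}^m\in U$, $\mathbf{U}_m:=[\mathbf{u}^1,\dots,\mathbf{u}^m]$, $U_m:=\mathrm{range}(\mathbf{U}_m)$, and $\mathbf{\Theta}\in\mathbb{K}^{k\times n}$ with $\mathbf{U}_m^{\mathbf{\Theta}}:=\mathbf{\Theta}\mathbf{U}_m$. Let $\mathbf{G}:=(\mathbf{U}_m^{\mathbf{\Theta}})^{\mathrm{H}}\mathbf{U}_m^{\mathbf{\Theta}}$, $l:=\mathrm{rank}(\mathbf{U}_m^{\mathbf{\Theta}})$, and let $(\lambda_i,\mathbf{t}_i)_{i=1}^{l}$ be eigenpairs of $\mathbf{G}$ associated with its nonzero eigenvalues, with orthonormal eigenvectors and $\lambda_1\ge\dots\ge\lambda_l$. For $r\le l$ set $\mathbf{T}_r:=[\mathbf{t}_1,\dots,\mathbf{t}_r]$ and $U_r:=\mathrm{range}(\mathbf{U}_m\mathbf{T}_r)$. For a subspace $V\subseteq U_m$ let $\mathbf{P}_V^{\mathbf{\Theta}}\mathbf{x}\in\arg\min_{\mathbf{w}\in V}\|\mathbf{\Theta}(\mathbf{x}-\mathbf{w})\|$ for $\mathbf{x}\in U_m$, and define $$\Delta^{\mathrm{POD}}(V):=\frac1m\sum_{i=1}^m\|\mathbf{\Theta}(\mathbf{u}^i-\mathbf{P}_V^{\mathbf{\Theta}}\mathbf{u}^i)\|^2.$$ Then $\Delta^{\mathrm{POD}}(U_r)=\frac1m\sum_{i=r+1}^{l}\lambda_i$,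 and for every subspace $V_r\subseteq U_m$ with $\dim(V_r)\le r$, $\Delta^{\mathrm{POD}}(U_r)\le\Delta^{\mathrm{POD}}(V_r)$.
   Context: $\|\cdot\|$ is the Euclidean norm on $\mathbb{K}^k$; $\mathbf{M}^{\mathrm{H}}$ is the (conjugate) transpose; $\mathrm{range}$ is column space. The value $\|\mathbf{\Theta}(\mathbf{x}-\mathbf{P}_V^{\mathbf{\Theta}}\mathbf{x})\|$ does not depend on the choice of minimizer. *)

(* Defs.v *)
From mathcomp Require Import all_boot all_order all_algebra.
Set Implicit Arguments. Unset Strict Implicit. Unset Printing Implicit Defensive.
Import Order.TTheory GRing.Theory Num.Theory.
Local Open Scope ring_scope.

(* Vectors of K^n are column vectors 'cV[K]_n.  A subspace is represented by
   a matrix B : 'M[K]_(n,p) and denotes its column space range(B). *)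

(* conjugate transpose, relative to a conjugation cj (id for K = R,
   complex conjugation for K = C) *)
Definition adjmx (K : numFieldType) (cj : K -> K) (p q : nat)
  (A : 'M[K]_(p, q)) : 'M[K]_(q, p) := map_mx cj A^T.

Definition sqnorm (K : numFieldType) (k : nat) (v : 'cV[K]_k) : K :=
  \sum_(i < k) `|v i 0| ^+ 2.

Definition in_range (K : fieldType) (n p : nat) (x : 'cV[K]_n)
  (B : 'M[K]_(n, p)) : bool := (x^T <= B^T)%MS.

(* w is a minimizer of  w' |-> ||Th (x - w')||  over range(B)
   (equivalently of the squared norm) *)
Definition is_Theta_proj (K : numFieldType) (k n p : nat) (Th : 'M[K]_(k, n))
  (B : 'M[K]_(n, p)) (x w : 'cV[K]_n) : Prop :=
  in_range w B /\
  forall w', in_range w' B ->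
    sqnorm (Th *m (x - w)) <= sqnorm (Th *m (x - w')).

(* Delta^POD(V) computed with a choice P i of P_V^Th u^i *)
Definition DeltaPOD (K : numFieldType) (k n m : nat) (Th : 'M[K]_(k, n))
  (U : 'M[K]_(n, m)) (P : 'I_m -> 'cV[K]_n) : K :=
  m%:R^-1 * \sum_(i < m) sqnorm (Th *m (col i U - P i)).

Definition lcols (K : Type) (m l r : nat) (hr : (r <= l)%N) (T : 'M[K]_(m, l))
  : 'M[K]_(m, r) := \matrix_(i < m, j < r) T i (widen_ord hr j).

Definition POD_statement (K : numFieldType) (cj : K -> K) : Prop :=
  forall (n m k : nat) (U : 'M[K]_(n, m)) (Th : 'M[K]_(k, n)),
  let UTh := Th *m U in
  let G := adjmx cj UTh *m UTh in
  let l := \rank UTh in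
  forall (lam : 'I_l -> K) (T : 'M[K]_(m, l)),
    (forall i, G *m col i T = lam i *: col i T) ->
    (forall i, lam i != 0) ->
    adjmx cj T *m T = 1%:M ->
    (forall i j : 'I_l, (i <= j)%N -> lam j <= lam i) ->
  forall (r : nat) (hr : (r <= l)%N),
    let Ur := U *m lcols hr T in
    (exists P : 'I_m -> 'cV[K]_n,
        forall i, is_Theta_proj Th Ur (col i U) (P i)) /\
    (forall P : 'I_m -> 'cV[K]_n,
        (forall i, is_Theta_proj Th Ur (col i U) (P i)) ->
        DeltaPOD Th U P = m%:R^-1 * \sum_(i < l | (r <= i)%N) lam i) /\
    (forall (p : nat) (V : 'M[K]_(n, p)),
        (V^T <= U^T)%MS -> (\rank V <= r)%N ->
        forall PU PV : 'I_m -> 'cV[K]_n,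
          (forall i, is_Theta_proj Th Ur (col i U) (PU i)) ->
          (forall i, is_Theta_proj Th V (col i U) (PV i)) ->
          DeltaPOD Th U PU <= DeltaPOD Th U PV).

(* Main.v *)
Require Import Defs.
From mathcomp Require Import all_boot all_order all_algebra.
From mathcomp Require Import ring.
Set Implicit Arguments. Unset Strict Implicit. Unset Printing Implicit Defensive.
Import Order.TTheory GRing.Theory Num.Theory.
Local Open Scope ring_scope.

Lemma knapsack (K : numFieldType) l r (lam d : 'I_l -> K) :
  (forall i, 0 < lam i) -> (forall i j : 'I_l, (i <= j)%N -> lam j <= lam i) ->
  (forall i, 0 <= d i) -> (forall i, d i <= lam i) ->
  \sum_i (lam i)^-1 * d i <= r%:R ->
  \sum_i d i <= \sum_(i < l | (i < r)%N) lam i.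
Proof.
move=> lp mono d0 dl hs.
case: (ltnP r l) => hrl; last first.
  rewrite [X in _ <= X]big_mkcond /=; apply: ler_sum => i _.
  by rewrite (leq_trans (ltn_ord i) hrl).
set mu := lam (Ordinal hrl).
have mu0 : 0 <= mu by apply: ltW (lp _).
set c := fun i => (lam i)^-1 * d i.
have dc i : d i = lam i * c i by rewrite /c mulVKf // gt_eqF.
have c0 i : 0 <= c i by rewrite /c mulr_ge0 // invr_ge0; apply: ltW.
have c1 i : c i <= 1 by rewrite /c mulrC ler_pdivrMr // mul1r.
have t1 (i : 'I_l) : (i < r)%N -> d i <= lam i + mu * (c i - 1).
  move=> hi; rewrite dc -subr_ge0.
  have -> : lam i + mu * (c i - 1) - lam i * c i = (lam i - mu) * (1 - c i) by ring.
  by rewrite mulr_ge0 // subr_ge0 ?c1 // mono // ltnW.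
have t2 (i : 'I_l) : ~~ (i < r)%N -> d i <= mu * c i.
  by rewrite -leqNgt => hi; rewrite dc ler_wpM2r // mono.
rewrite (bigID (fun i : 'I_l => (i < r)%N)) /=.
apply: le_trans (_ : \sum_(i < l | (i < r)%N) (lam i + mu * (c i - 1)) +
   \sum_(i < l | ~~ (i < r)%N) mu * c i <= _).
  by apply: lerD; apply: ler_sum => i hi; [apply: t1 | apply: t2].
rewrite big_split /= -addrA gerDl.
under eq_bigr do rewrite mulrBr mulr1.
rewrite sumrB -!mulr_sumr.
have -> : \sum_(i < l | (i < r)%N) mu = mu * r%:R.
  by rewrite (big_ord_narrow (ltnW hrl)) sumr_const card_ord mulr_natr.
have -> : mu * (\sum_(i < l | (i < r)%N) c i) - mu * r%:R + mu * (\sum_(i < l | ~~ (i < r)%N) c i)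
  = mu * ((\sum_(i < l | (i < r)%N) c i + \sum_(i < l | ~~ (i < r)%N) c i) - r%:R) by ring.
rewrite -(bigID (fun i : 'I_l => (i < r)%N) predT c).
rewrite mulr_ge0_le0 // subr_le0; exact: hs.
Qed.

Section Base.
Variable K : numFieldType.
Variable cj : {rmorphism K -> K}.
Hypothesis cjK : involutive cj.
Hypothesis cjnorm : forall x : K, cj x * x = `|x| ^+ 2.

Local Notation adj := (adjmx cj).

Lemma adjM p q s (A : 'M[K]_(p,q)) (B : 'M_(q,s)) : adj (A *m B) = adj B *m adj A.
Proof. by rewrite /adjmx trmx_mul map_mxM. Qed.
Lemma adjD p q (A B : 'M[K]_(p,q)) : adj (A + B) = adj A + adj B.
Proof. by rewrite /adjmx linearD map_mxD. Qed.
Lemma adjN p q (A : 'M[K]_(p,q)) : adj (- A) = - adj A.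
Proof. by rewrite /adjmx linearN map_mxN. Qed.
Lemma adjB p q (A B : 'M[K]_(p,q)) : adj (A - B) = adj A - adj B.
Proof. by rewrite adjD adjN. Qed.
Lemma adjK p q (A : 'M[K]_(p,q)) : adj (adj A) = A.
Proof. by apply/matrixP => i j; rewrite !mxE cjK. Qed.
Lemma adj1 p : adj (1%:M : 'M[K]_p) = 1%:M.
Proof. by rewrite /adjmx trmx1 map_mx1. Qed.
Lemma adj0 p q : adj (0 : 'M[K]_(p,q)) = 0.
Proof. by apply/matrixP => i j; rewrite !mxE rmorph0. Qed.
Lemma adjE p q (A : 'M[K]_(p,q)) i j : adj A i j = cj (A j i).
Proof. by rewrite !mxE. Qed.

Definition fro p q (X : 'M[K]_(p,q)) := \tr (adj X *m X).

Lemma adjXX_diag p q (X : 'M[K]_(p,q)) j : (adj X *m X) j j = sqnorm (col j X).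
Proof. by rewrite !mxE /sqnorm; apply: eq_bigr => i _; rewrite !mxE cjnorm. Qed.

Lemma sqnorm_ge0 p (v : 'cV[K]_p) : 0 <= sqnorm v.
Proof. by apply: sumr_ge0 => i _; rewrite exprn_ge0. Qed.

Lemma sqnorm_eq0 p (v : 'cV[K]_p) : sqnorm v = 0 -> v = 0.
Proof.
move=> /eqP; rewrite psumr_eq0 => [/allP H|i _]; last by rewrite exprn_ge0.
apply/matrixP => i j; rewrite ord1 mxE; have := H i (mem_index_enum i).
by rewrite expf_eq0 normr_eq0 /= => /eqP.
Qed.

Lemma fro_cols p q (X : 'M[K]_(p,q)) : fro X = \sum_j sqnorm (col j X).
Proof. by rewrite /fro /mxtrace; apply: eq_bigr => j _; rewrite adjXX_diag. Qed.

Lemma fro_ge0 p q (X : 'M[K]_(p,q)) : 0 <= fro X.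
Proof. by rewrite fro_cols; apply: sumr_ge0 => j _; apply: sqnorm_ge0. Qed.

Lemma fro_eq0 p q (X : 'M[K]_(p,q)) : fro X = 0 -> X = 0.
Proof.
rewrite fro_cols => /eqP; rewrite psumr_eq0 => [/allP H|i _]; last exact: sqnorm_ge0.
apply/matrixP => i j; have /eqP/sqnorm_eq0/matrixP/(_ i 0) := H j (mem_index_enum j).
by rewrite !mxE.
Qed.

Lemma sqnorm_fro p (v : 'cV[K]_p) : sqnorm v = fro v.
Proof.
by rewrite fro_cols big_ord1; congr sqnorm; apply/matrixP => i j; rewrite ord1 mxE.
Qed.

Lemma fro_pyth p q (X Y : 'M[K]_(p,q)) : adj Y *m X = 0 -> fro (X + Y) = fro X + fro Y.
Proof.
move=> H; have H' : adj X *m Y = 0 by rewrite -[Y]adjK -adjM H adj0.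
by rewrite /fro adjD mulmxDl !mulmxDr H H' addr0 add0r mxtraceD.
Qed.

Lemma fro_pyth_le p q (X Y : 'M[K]_(p,q)) : adj Y *m X = 0 -> fro X <= fro (X + Y).
Proof. by move=> /fro_pyth ->; rewrite lerDl fro_ge0. Qed.

Lemma proj_fro p q (P : 'M[K]_p) (X : 'M_(p,q)) : adj P = P -> P *m P = P ->
  fro (P *m X) = \tr (adj X *m P *m X).
Proof. by move=> h1 h2; rewrite /fro adjM h1 mulmxA -(mulmxA _ P P) h2. Qed.

Lemma proj_compl p (P : 'M[K]_p) : adj P = P -> P *m P = P ->
  adj (1%:M - P) = 1%:M - P /\ (1%:M - P) *m (1%:M - P) = 1%:M - P.
Proof.
move=> h1 h2; rewrite adjB adj1 h1; split => //.
by rewrite mulmxBl !mulmxBr !mul1mx mulmx1 h2 subrr subr0.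
Qed.

Lemma proj_tr p (P1 P2 : 'M[K]_p) : adj P1 = P1 -> P1 *m P1 = P1 ->
  adj P2 = P2 -> P2 *m P2 = P2 -> \tr (P1 *m P2) <= \tr P1.
Proof.
move=> h1 h2 h3 h4; have [c1 c2] := proj_compl h3 h4.
have := fro_ge0 ((1%:M - P2) *m P1); rewrite proj_fro // h1.
rewrite mxtrace_mulC mulmxA h2 mulmxBr mulmx1 linearB /= subr_ge0.
by rewrite mxtrace_mulC.
Qed.

Lemma KEY_gen p q s (A0 : 'M[K]_(p,q)) (T0 : 'M[K]_(q,s)) (E0 D0 : 'M[K]_s) :
  adj T0 *m (adj A0 *m A0) = D0 *m adj T0 ->
  adj T0 *m (adj A0 *m A0) *m T0 = D0 -> adj E0 = E0 -> E0 *m E0 = E0 ->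
  D0 *m E0 = E0 *m D0 ->
  adj (A0 *m T0 *m E0) *m (A0 *m (1%:M - T0 *m E0 *m adj T0)) = 0.
Proof.
move=> tg tgt eh ee de.
rewrite adjM eh adjM mulmxBr mulmx1 !mulmxBr.
have -> : E0 *m (adj T0 *m adj A0) *m A0 = E0 *m (D0 *m adj T0).
  by rewrite -!mulmxA tg.
have -> : E0 *m (adj T0 *m adj A0) *m (A0 *m (T0 *m E0 *m adj T0)) = E0 *m D0 *m E0 *m adj T0.
  by rewrite -tgt !mulmxA.
by rewrite -(mulmxA E0 D0 E0) de (mulmxA E0 E0 D0) ee !mulmxA subrr.
Qed.

Lemma fro_gen p q s (A0 : 'M[K]_(p,q)) (T0 : 'M[K]_(q,s)) (E0 D0 : 'M[K]_s) :
  adj T0 *m (adj A0 *m A0) *m T0 = D0 -> adj T0 *m T0 = 1%:M -> adj E0 = E0 ->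
  E0 *m E0 = E0 -> D0 *m E0 = E0 *m D0 ->
  fro (A0 *m T0 *m E0 *m adj T0) = \tr (D0 *m E0).
Proof.
move=> tgt tt eh ee de.
set X := A0 *m T0 *m E0.
have e1 : adj X *m X = E0 *m D0.
  have -> : adj X *m X = E0 *m (adj T0 *m (adj A0 *m A0) *m T0) *m E0.
    by rewrite /X !adjM eh !mulmxA.
  by rewrite tgt -mulmxA de mulmxA ee.
rewrite /fro adjM adjK mxtrace_mulC -mulmxA (mulmxA (adj T0)) tt mul1mx.
by rewrite mxtrace_mulC e1 mxtrace_mulC.
Qed.

Lemma proj_exists q p (F : 'M[K]_(q,p)) : exists s (B : 'M[K]_(q,s)) (C : 'M[K]_(s,p)) (Pi : 'M[K]_q),
  [/\ F = B *m C, adj Pi = Pi, Pi *m Pi = Pi, Pi *m B = B & \tr Pi = s%:R /\ (s <= \rank F)%N].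
Proof.
set s := \rank F^T; set Fb := row_base F^T.
have sub : (F^T <= Fb)%MS by rewrite /Fb eq_row_base.
set C := (F^T *m pinvmx Fb)^T.
have hF : F = Fb^T *m C by rewrite /C -trmx_mul mulmxKpV // trmxK.
set M := adj (Fb^T) *m Fb^T.
have Mh : adj M = M by rewrite /M adjM adjK.
have Mu : M \in unitmx.
  rewrite -row_free_unit; apply/inj_row_free => v hv.
  have Mw : M *m adj v = 0 by rewrite -Mh -adjM hv adj0.
  have Bw : Fb^T *m adj v = 0.
    apply: fro_eq0; rewrite /fro adjM -mulmxA (mulmxA (adj (Fb^T))) -/M Mw.
    by rewrite mulmx0 linear0.
  have : (adj v)^T *m Fb = 0 *m Fb by rewrite mul0mx -[Fb]trmxK -trmx_mul Bw trmx0.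
  move/(row_free_inj (row_base_free _)) => h.
  by rewrite -[v]adjK -[adj v]trmxK h trmx0 adj0.
set Mi := invmx M.
have Mih : adj Mi = Mi by rewrite /adjmx /Mi trmx_inv map_invmx -/(adjmx cj M) Mh.
exists s, Fb^T, C, (Fb^T *m Mi *m adj (Fb^T)).
have PiB : Fb^T *m Mi *m adj (Fb^T) *m Fb^T = Fb^T.
  by rewrite -mulmxA -/M -mulmxA mulVmx // mulmx1.
split => //.
- by rewrite !adjM adjK Mih mulmxA.
- by rewrite !mulmxA PiB.
- split; last by rewrite /s mxrank_tr.
  by rewrite mxtrace_mulC mulmxA -/M mulmxV // mxtrace1.
Qed.

Lemma cross0 p q s (Pi : 'M[K]_p) (A0 : 'M[K]_(p,q)) (B : 'M[K]_(p,s)) (Z : 'M[K]_(s,q)) :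
  adj Pi = Pi -> Pi *m Pi = Pi -> Pi *m B = B ->
  adj (Pi *m A0 - B *m Z) *m ((1%:M - Pi) *m A0) = 0.
Proof.
move=> herm idem PiB.
have h1 : Pi *m (1%:M - Pi) = 0 by rewrite mulmxBr mulmx1 idem subrr.
have h2 : adj B *m (1%:M - Pi) = 0.
  by rewrite mulmxBr mulmx1 -herm -adjM PiB subrr.
rewrite adjB !adjM herm mulmxBl -!mulmxA (mulmxA Pi) h1 (mulmxA (adj B)) h2.
by rewrite !mul0mx !mulmx0 subrr.
Qed.

Lemma projXX p q s (P : 'M[K]_p) (A0 : 'M[K]_(p,q)) (T0 : 'M[K]_(q,s)) :
  adj P = P -> P *m P = P ->
  adj (P *m A0 *m T0) *m (P *m A0 *m T0) = adj T0 *m adj A0 *m P *m A0 *m T0.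
Proof.
move=> herm idem; rewrite !adjM herm !mulmxA.
by rewrite -(mulmxA _ P P) idem.
Qed.

Lemma complXX p q s (P : 'M[K]_p) (A0 : 'M[K]_(p,q)) (T0 : 'M[K]_(q,s)) :
  adj T0 *m adj A0 *m (1%:M - P) *m A0 *m T0 =
  adj T0 *m (adj A0 *m A0) *m T0 - adj T0 *m adj A0 *m P *m A0 *m T0.
Proof. by rewrite mulmxBr mulmx1 !mulmxBl !mulmxA. Qed.

Lemma Qproj p q s (A0 : 'M[K]_(p,q)) (T0 : 'M[K]_(q,s)) (Di D0 : 'M[K]_s) :
  adj T0 *m (adj A0 *m A0) *m T0 = D0 -> adj Di = Di -> Di *m D0 = 1%:M ->
  adj (A0 *m T0 *m Di *m adj T0 *m adj A0) = A0 *m T0 *m Di *m adj T0 *m adj A0 /\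
  (A0 *m T0 *m Di *m adj T0 *m adj A0) *m (A0 *m T0 *m Di *m adj T0 *m adj A0)
    = A0 *m T0 *m Di *m adj T0 *m adj A0.
Proof.
move=> tgt dh dd; split; first by rewrite !adjM !adjK dh !mulmxA.
have -> : (A0 *m T0 *m Di *m adj T0 *m adj A0) *m (A0 *m T0 *m Di *m adj T0 *m adj A0)
  = A0 *m T0 *m Di *m (adj T0 *m (adj A0 *m A0) *m T0) *m Di *m adj T0 *m adj A0.
  by rewrite !mulmxA.
by rewrite tgt -(mulmxA _ Di D0) dd mulmx1.
Qed.

Lemma trQ p q s (A0 : 'M[K]_(p,q)) (T0 : 'M[K]_(q,s)) (Di : 'M[K]_s) (Pi : 'M[K]_p) :
  \tr (Di *m (adj T0 *m adj A0 *m Pi *m A0 *m T0)) =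
  \tr (Pi *m (A0 *m T0 *m Di *m adj T0 *m adj A0)).
Proof.
rewrite !mulmxA mxtrace_mulC !mulmxA mxtrace_mulC !mulmxA mxtrace_mulC !mulmxA.
done.
Qed.

Lemma colPm n0 m0 (P : 'I_m0 -> 'cV[K]_n0) i : col i (\matrix_(j, i) P i j 0) = P i.
Proof. by apply/matrixP => a b; rewrite !mxE ord1. Qed.

Lemma DeltaPOD_fro n0 m0 k0 (Th0 : 'M[K]_(k0,n0)) (U0 : 'M[K]_(n0,m0)) P :
  DeltaPOD Th0 U0 P = m0%:R^-1 * fro (Th0 *m (U0 - \matrix_(j, i) P i j 0)).
Proof.
rewrite /DeltaPOD fro_cols; congr (_ * _); apply: eq_bigr => i _; congr sqnorm.
by rewrite -(colPm P i) !colE -mulmxBl mulmxA.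
Qed.

Section Main.
Variables (n m k : nat) (U : 'M[K]_(n,m)) (Th : 'M[K]_(k,n)).
Local Notation A := (Th *m U).
Local Notation l := (\rank (Th *m U)).
Local Notation G := (adj A *m A).
Variables (lam : 'I_l -> K) (T : 'M[K]_(m,l)).
Hypothesis hG : forall i, G *m col i T = lam i *: col i T.
Hypothesis hnz : forall i, lam i != 0.
Hypothesis hT : adj T *m T = 1%:M.
Hypothesis hmono : forall i j : 'I_l, (i <= j)%N -> lam j <= lam i.

Local Notation D := (diag_mx (\row_(i < l) lam i)).
Local Notation Dinv := (diag_mx (\row_(i < l) (lam i)^-1)).

Lemma GT : G *m T = T *m D.
Proof.
apply/matrixP => i j.
have e : G *m col j T = col j (G *m T) by rewrite !colE mulmxA.
move/matrixP: (hG j) => /(_ i 0); rewrite e mul_mx_diag !mxE => ->.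
by rewrite mulrC.
Qed.

Lemma Gherm : adj G = G.
Proof. by rewrite adjM adjK. Qed.

Lemma TGT : adj T *m G *m T = D.
Proof. by rewrite -mulmxA GT mulmxA hT mul1mx. Qed.

Lemma Dherm : adj D = D.
Proof. by rewrite -TGT !adjM !adjK !mulmxA. Qed.

Lemma TG : adj T *m G = D *m adj T.
Proof.
have := congr1 (fun X : 'M[K]_(m,l) => adj X) GT; rewrite /= !adjM !adjK => ->.
by rewrite Dherm.
Qed.

Lemma D_ii i : D i i = lam i.
Proof. by rewrite !mxE eqxx mulr1n. Qed.

Lemma lam_ge0 i : 0 <= lam i.
Proof.
rewrite -D_ii -TGT.
have -> : adj T *m G *m T = adj (A *m T) *m (A *m T) by rewrite !adjM !mulmxA.
by rewrite adjXX_diag sqnorm_ge0.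
Qed.

Lemma lam_gt0 i : 0 < lam i.
Proof. by rewrite lt_def hnz lam_ge0. Qed.

Lemma cj_lam i : cj (lam i) = lam i.
Proof. by move/matrixP: Dherm => /(_ i i); rewrite adjE D_ii. Qed.

Lemma DDinv : D *m Dinv = 1%:M.
Proof.
by rewrite mulmx_diag; apply/matrixP=> i j; rewrite !mxE mulfV.
Qed.

Lemma DinvD : Dinv *m D = 1%:M.
Proof.
by rewrite mulmx_diag; apply/matrixP=> i j; rewrite !mxE mulVf.
Qed.

Lemma Dinvherm : adj Dinv = Dinv.
Proof.
apply/matrixP => i j; rewrite !mxE rmorphMn fmorphV eq_sym.
by case: (eqVneq i j) => [->|_]; rewrite ?cj_lam ?mulr0n.
Qed.

Lemma rankT : \rank T = l.
Proof.
apply/eqP; rewrite eqn_leq rank_leq_col /=.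
by have := mxrankM_maxr (adj T) T; rewrite hT mxrank1.
Qed.

Lemma G_TT : T *m adj T *m G = G.
Proof.
have eT : G *m T *m Dinv = T by rewrite GT -mulmxA DDinv mulmx1.
have sub1 : (T^T <= G^T)%MS.
  by rewrite -{1}eT !trmx_mul mulmxA submxMl.
have sub2 : (G^T <= T^T)%MS.
  have [le <-] := mxrank_leqif_sup sub1.
  rewrite eqn_leq le /= !mxrank_tr rankT.
  exact: leq_trans (mxrankM_maxr _ _) (leqnn _).
have eG := mulmxKpV sub2.
have -> : G = T *m (G^T *m pinvmx T^T)^T.
  by rewrite -[LHS]trmxK -{1}eG trmx_mul trmxK.
by rewrite !mulmxA -(mulmxA T) hT mulmx1.
Qed.

Lemma G_eq : G = T *m D *m adj T.
Proof.
have := congr1 (fun X : 'M[K]_m => adj X) G_TT; rewrite /= adjM Gherm (adjM T) adjK => <-.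
by rewrite mulmxA GT.
Qed.

Lemma A_TT : A *m T *m adj T = A.
Proof.
set N := 1%:M - T *m adj T.
have GN : G *m N = 0.
  have := congr1 (fun X : 'M[K]_m => adj X) G_TT; rewrite /= adjM Gherm (adjM T) adjK mulmxA => e.
  by rewrite /N mulmxBr mulmx1 (mulmxA _ T) e subrr.
have : fro (A *m N) = 0.
  by rewrite /fro adjM -mulmxA (mulmxA (adj A)) GN mulmx0 linear0.
move/fro_eq0; rewrite /N mulmxBr mulmx1 => /eqP.
by rewrite subr_eq0 mulmxA => /eqP <-.
Qed.

Lemma trG : \tr G = \tr D.
Proof. by rewrite G_eq mxtrace_mulC mulmxA hT mul1mx. Qed.

Lemma froA : fro A = \tr D.
Proof. exact: trG. Qed.


Lemma trD_split r : \tr D =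
  \sum_(i < l | (i < r)%N) lam i + \sum_(i < l | (r <= i)%N) lam i.
Proof.
rewrite mxtrace_diag (bigID (fun i : 'I_l => (i < r)%N)) /=.
congr (_ + _); first by apply: eq_bigr => i _; rewrite mxE.
by apply: eq_big => [i|i _]; rewrite ?mxE // -leqNgt.
Qed.

Lemma EY p (F : 'M[K]_(k,p)) (Y : 'M[K]_(p,m)) r : (\rank F <= r)%N ->
  \sum_(i < l | (r <= i)%N) lam i <= fro (Th *m U - F *m Y).
Proof.
move=> rF.
have [s [B [C [Pi [hF Ph Pi2 PiB [trPi sF]]]]]] := proj_exists F.
have [Qh Q2] := proj_compl Ph Pi2.
have stepA : fro ((1%:M - Pi) *m (Th *m U)) <= fro (Th *m U - F *m Y).
  have e : Th *m U - F *m Y = (1%:M - Pi) *m (Th *m U) + (Pi *m (Th *m U) - B *m (C *m Y)).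
    by rewrite hF mulmxBl mul1mx addrA subrK mulmxA.
  by rewrite e; apply: fro_pyth_le; apply: cross0.
have stepB : fro ((1%:M - Pi) *m (Th *m U)) = \tr D - \tr (adj (Th *m U) *m Pi *m (Th *m U)).
  by rewrite proj_fro // mulmxBr mulmx1 mulmxBl linearB /= trG.
have stepC : \tr (adj (Th *m U) *m Pi *m (Th *m U)) =
    \tr (adj T *m adj (Th *m U) *m Pi *m (Th *m U) *m T).
  have -> : \tr (adj (Th *m U) *m Pi *m (Th *m U)) =
     \tr (adj (Th *m U) *m Pi *m (Th *m U *m T *m adj T)) by rewrite A_TT.
  by rewrite !mulmxA mxtrace_mulC !mulmxA.
have Hge0 i : 0 <= (adj T *m adj (Th *m U) *m Pi *m (Th *m U) *m T) i i.
  by rewrite -projXX // adjXX_diag sqnorm_ge0.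
have Hle i : (adj T *m adj (Th *m U) *m Pi *m (Th *m U) *m T) i i <= lam i.
  have := sqnorm_ge0 (col i ((1%:M - Pi) *m (Th *m U) *m T)).
  rewrite -adjXX_diag projXX // complXX TGT.
  by rewrite [X in 0 <= X]mxE [X in 0 <= _ + X]mxE subr_ge0 D_ii.
have Hsum : \sum_i (lam i)^-1 * (adj T *m adj (Th *m U) *m Pi *m (Th *m U) *m T) i i <= r%:R.
  have -> : \sum_i (lam i)^-1 * (adj T *m adj (Th *m U) *m Pi *m (Th *m U) *m T) i i =
      \tr (Dinv *m (adj T *m adj (Th *m U) *m Pi *m (Th *m U) *m T)).
    rewrite mul_diag_mx /mxtrace; apply: eq_bigr => i _.
    by rewrite [in RHS]mxE [in RHS]mxE.
  rewrite trQ.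
  have [Qh' Q2'] := Qproj TGT Dinvherm DinvD.
  apply: le_trans (proj_tr Ph Pi2 Qh' Q2') _.
  by rewrite trPi ler_nat (leq_trans _ rF) // -mxrank_tr.
have kn := knapsack lam_gt0 hmono Hge0 Hle Hsum.
apply: le_trans stepA; rewrite stepB stepC (trD_split r) /mxtrace.
by rewrite addrAC -subr_ge0 addrK subr_ge0.
Qed.

Section Sel.
Variables (r : nat) (hr : (r <= l)%N).

Definition S : 'M[K]_(l, r) := \matrix_(i, j) ((i == widen_ord hr j)%:R).
Local Notation E := (diag_mx (\row_(i < l) (((i < r)%N)%:R : K))).

Lemma lcolsE : lcols hr T = T *m S.
Proof.
apply/matrixP => i j; rewrite !mxE (bigD1 (widen_ord hr j)) //= !mxE eqxx mulr1.
by rewrite big1 ?addr0 // => c /negPf nc; rewrite !mxE nc mulr0.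
Qed.

Lemma StS : S^T *m S = 1%:M.
Proof.
apply/matrixP => i j; rewrite !mxE (bigD1 (widen_ord hr i)) //= !mxE eqxx mul1r.
rewrite big1 ?addr0 => [|c /negPf nc]; last by rewrite !mxE nc mul0r.
by congr (_%:R); apply/eqP/eqP => [/(congr1 val) /= /val_inj|->].
Qed.

Lemma SSt : S *m S^T = E.
Proof.
apply/matrixP => i j; rewrite !mxE; case: ltnP => hi.
  rewrite (bigD1 (Ordinal hi)) //= !mxE.
  have -> : (i == widen_ord hr (Ordinal hi)) by apply/eqP/val_inj.
  rewrite mul1r big1 ?addr0 => [|c nc]; last first.
    rewrite !mxE; case: eqP => [ei|]; last by rewrite mul0r.
    by case/eqP: nc; apply/val_inj; rewrite /= ei.
  by rewrite -!val_eqE /= eq_sym.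
rewrite big1 ?mul0rn // => c _; rewrite !mxE; case: eqP => [ei|]; last by rewrite mul0r.
by move: (ltn_ord c) hi; rewrite ei /= => h1 h2; move: (leq_trans h1 h2); rewrite ltnn.
Qed.

Lemma adjS : adj S = S^T.
Proof. by apply/matrixP => i j; rewrite !mxE rmorph_nat. Qed.

Lemma Eherm : adj E = E.
Proof.
apply/matrixP => i j; rewrite !mxE rmorphMn rmorph_nat eq_sym.
by case: (eqVneq i j) => [->|_]; rewrite ?mulr0n.
Qed.

Lemma EE : E *m E = E.
Proof. by rewrite -SSt mulmxA -(mulmxA S) StS mulmx1. Qed.

Lemma ES : E *m S = S.
Proof. by rewrite -SSt -mulmxA StS mulmx1. Qed.

Lemma DE : D *m E = E *m D.
Proof. exact: diag_mx_comm. Qed.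

Lemma trDE : \tr (D *m E) = \sum_(i < l | (i < r)%N) lam i.
Proof.
rewrite mulmx_diag mxtrace_diag [RHS]big_mkcond /=; apply: eq_bigr => i _.
by rewrite !mxE; case: ltnP; rewrite ?mulr1 ?mulr0.
Qed.

Lemma KEY : adj (A *m T *m E) *m (A *m (1%:M - T *m E *m adj T)) = 0.
Proof. apply: (KEY_gen (D0 := D)); [exact: TG | exact: TGT | exact: Eherm | exact: EE | exact: DE]. Qed.

Definition P0 (i : 'I_m) : 'cV[K]_n := col i (U *m T *m E *m adj T).

Lemma P0_proj i : is_Theta_proj Th (U *m lcols hr T) (col i U) (P0 i).
Proof.
rewrite lcolsE /P0; split.
  rewrite /in_range.
  have -> : col i (U *m T *m E *m adj T) = U *m (T *m S) *m (S^T *m adj T *m delta_mx i 0).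
    by rewrite colE -SSt !mulmxA.
  by rewrite trmx_mul submxMl.
move=> w' /submxP [D0 hD0].
have hw : w' = U *m T *m E *m (S *m D0^T).
  by rewrite -[w']trmxK hD0 trmx_mul trmxK !mulmxA -(mulmxA _ E S) ES.
set ei := delta_mx i 0 : 'cV[K]_m.
set Y := Th *m U *m T *m E *m (adj T *m ei - S *m D0^T).
have e1 : Th *m (col i U - col i (U *m T *m E *m adj T)) =
    Th *m U *m (1%:M - T *m E *m adj T) *m ei.
  by rewrite !colE mulmxBr mulmxBr mulmx1 mulmxBl !mulmxA.
have e2 : Th *m (col i U - w') = Th *m U *m (1%:M - T *m E *m adj T) *m ei + Y.
  rewrite hw colE /Y mulmxBr mulmxBr mulmx1 mulmxBl !mulmxBr !mulmxA.
  by rewrite addrA subrK.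
rewrite e1 e2 !sqnorm_fro; apply: fro_pyth_le.
by rewrite /Y adjM -mulmxA (mulmxA (adj (Th *m U *m T *m E))) KEY mul0mx mulmx0.
Qed.

Lemma froN : fro (Th *m U *m (1%:M - T *m E *m adj T)) = \sum_(i < l | (r <= i)%N) lam i.
Proof.
have hY : adj (Th *m U *m T *m E *m adj T) *m (Th *m U *m (1%:M - T *m E *m adj T)) = 0.
  by rewrite adjM adjK -mulmxA KEY mulmx0.
have := fro_pyth hY.
have -> : Th *m U *m (1%:M - T *m E *m adj T) + Th *m U *m T *m E *m adj T = Th *m U.
  by rewrite mulmxBr mulmx1 !mulmxA subrK.
rewrite froA (fro_gen TGT hT Eherm EE DE) => h.
have -> : fro (Th *m U *m (1%:M - T *m E *m adj T)) = \tr D - \tr (D *m E).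
  by rewrite h addrK.
rewrite trDE mxtrace_diag (bigID (fun i : 'I_l => (i < r)%N)) /=.
under eq_bigr do rewrite mxE.
rewrite [X in X - _]addrC addrK; apply: eq_big => [i|i _]; last by rewrite mxE.
by rewrite -leqNgt.
Qed.

Lemma sumP0 : \sum_i sqnorm (Th *m (col i U - P0 i)) = \sum_(i < l | (r <= i)%N) lam i.
Proof.
rewrite -froN fro_cols; apply: eq_bigr => i _; congr sqnorm.
by rewrite /P0 !colE mulmxBr mulmxBr mulmx1 mulmxBl !mulmxA.
Qed.

End Sel.
End Main.
End Base.

Lemma POD_gen (K : numFieldType) (cj : {rmorphism K -> K}) :
  involutive cj -> (forall x : K, cj x * x = `|x| ^+ 2) -> POD_statement cj.
Proof.
move=> cjK cjn n m k U Th; cbv zeta.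
move=> lam T hG hnz hT hmono r hr.
have part2 : forall P : 'I_m -> 'cV[K]_n,
    (forall i, is_Theta_proj Th (U *m lcols hr T) (col i U) (P i)) ->
    DeltaPOD Th U P = m%:R^-1 * \sum_(i < \rank (Th *m U) | (r <= i)%N) lam i.
  move=> P hP; rewrite /DeltaPOD -(sumP0 cjK cjn hG hnz hT hr); congr (_ * _).
  apply: eq_bigr => i _; apply/eqP; rewrite eq_le; apply/andP; split.
    apply: (hP i).2; exact: (P0_proj cjK cjn hG hT hr i).1.
  apply: (P0_proj cjK cjn hG hT hr i).2; exact: (hP i).1.
split.
  by exists (P0 cj T r) => i; apply: (P0_proj cjK cjn hG hT hr i).
split; first exact: part2.
move=> p V _ rV PU PV hPU hPV.
rewrite (part2 _ hPU) (DeltaPOD_fro cjn).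
set Pm := \matrix_(j, i) PV i j 0.
have sub : (Pm^T <= V^T)%MS.
  apply/row_subP => i; rewrite -tr_col colPm; exact: (hPV i).1.
have hPm : Pm = V *m (Pm^T *m pinvmx V^T)^T.
  by rewrite -[LHS]trmxK -{1}(mulmxKpV sub) trmx_mul trmxK.
rewrite ler_wpM2l ?invr_ge0 ?ler0n //.
rewrite hPm mulmxBr mulmxA.
apply: (EY cjK cjn hG hnz hT hmono).
exact: leq_trans (mxrankM_maxr _ _) rV.
Qed.

Theorem proposition5p3 :
  (forall R : realFieldType, POD_statement (fun x : R => x)) /\
  (forall C : numClosedFieldType, POD_statement (@Num.conj C)).
Proof.
split.
  move=> R; apply: (@POD_gen R idfun) => // x.
  by rewrite real_normK ?num_real // expr2.
move=> C; apply: POD_gen; first exact: conjCK.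
by move=> x; rewrite normCKC.
Qed.
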